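(* Let $\mathrm{HTG}(m,n,\ell)$ be a honeycomb toroidal graph in normal form ($0\le \ell\le n/2$). Its girth is $6$, except in the following cases, in which its girth is $4$: (1) $n=4$; (2) $m=1$, $n>4$ and $\ell=3$; (3) $m=1$, $n>4$, $n\equiv 2\pmod 4$ and $\ell=n/2$; (4) $m=1$, $n>4$, $n\equiv 0\pmod 4$ and $\ell=(n-2)/2$; (5) $m=2$, $n>4$ and $\ell\in\{0,2\}$.
   Context: Honeycomb toroidal graph: let $m\ge 1$ be an integer, $n\ge 4$ an even integer, and $\ell$ an integer with $\ell\equiv m \pmod 2$. The graph $\mathrm{HTG}(m,n,\ell)$ has vertex set $\{u_{i,j}: 0\le i\le m-1,\ j\in\mathbb{Z}_n\}$ (second subscripts are taken modulo $n$; the vertices $u_{i,0},\dots,u_{i,n-1}$ form column $i$) and the following edges: vertical edges $u_{i,j}u_{i,j+1}$ for all $0\le i\le m-1$ and all $j$; flat edges $u_{i,j}u_{i+1,j}$ for $0\le i\le m-2$ and all $j$ with $i+j$ odd; jump edges $u_{m-1,j}u_{0,j+\ell}$ for all $j$ with $j\equiv m\pmod 2$. Only parameters for which this is a simple 3-regular graph are allowed (in particular, when $m=1$ one requires $\ell\not\equiv\pm1\pmod n$). The graph is in normal form if $0\le\ell\le n/2$. The girth is the length of a shortest cycle. *)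

(* Defs.v *)
From mathcomp Require Import all_boot.
Set Implicit Arguments. Unset Strict Implicit. Unset Printing Implicit Defensive.

(* Honeycomb toroidal graph HTG(m,n,l) on vertices u_{i,j} = (i, j) : 'I_m * 'I_n,
   with second coordinate read modulo n.  Here l is a natural number
   (normal form 0 <= l <= n/2). *)
Definition htg_adj (m n l : nat) : rel ('I_m * 'I_n) :=
  fun u v =>
    let i := nat_of_ord u.1 in let j := nat_of_ord u.2 in
    let i' := nat_of_ord v.1 in let j' := nat_of_ord v.2 in
    [|| (i == i') && ((j' == (j + 1) %% n) || (j == (j' + 1) %% n)),
        (j == j') && (((i' == i + 1) && odd (i + j)) || ((i == i' + 1) && odd (i' + j'))),
        [&& i == m - 1, i' == 0, j %% 2 == m %% 2 & j' == (j + l) %% n]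
      | [&& i' == m - 1, i == 0, j' %% 2 == m %% 2 & j == (j' + l) %% n]].

Arguments htg_adj : clear implicits.

Definition is_graph_cycle (T : eqType) (e : rel T) (c : seq T) : bool :=
  ucycleb e c && (2 < size c).

Definition girth_is (T : eqType) (e : rel T) (g : nat) : Prop :=
  (exists c, is_graph_cycle e c /\ size c = g) /\
  (forall c, is_graph_cycle e c -> g <= size c).

(* Main.v *)
Require Import Defs.
From mathcomp Require Import all_boot.
From mathcomp Require Import zify.

Lemma modE x n : 0 < n -> x < 2*n -> (x %% n = x /\ x < n) \/ (x %% n = x - n /\ n <= x).
Proof.
move=> n0 hx; case: (ltnP x n) => h; [left; split=>//; exact: modn_small|right; split=>//].
rewrite -{1}(subnK h) modnDr modn_small //; lia.
Qed.

Ltac elim_mod n := repeat match goal with |- context[(?x %% n)] =>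
  let H := fresh in assert (H : (x %% n = x /\ x < n) \/ (x %% n = x - n /\ n <= x)) by (apply modE; lia);
  revert H; generalize (x %% n); intro end.

Ltac split_adj H := case/or4P: H => [/andP[? /orP[?|?]] | /andP[? /orP[/andP[??]|/andP[??]]] | /and4P[????] | /and4P[????]].

Definition glob (m n l : nat) : Prop :=
  1 <= m /\ 4 <= n /\ ~~ odd n /\ l %% 2 = m %% 2 /\ (m = 1 -> l <> 1 /\ l + 1 <> n) /\ l + l <= n.

Definition TU n (i j i' j' : nat) := i' = i /\ ((j' = j+1 /\ j+1 < n) \/ (j' = 0 /\ j+1 = n)).
Definition TH m n l (i j i' j' : nat) :=
  (j' = j /\ i' = i+1 /\ (i+j)%%2 = 1) \/ (j'=j /\ i = i'+1 /\ (i'+j')%%2 = 1) \/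
  (i+1 = m /\ i' = 0 /\ j%%2 = m%%2 /\ (j' = j+l \/ j'+n = j+l)) \/
  (i'+1 = m /\ i = 0 /\ j'%%2 = m%%2 /\ (j = j'+l \/ j+n = j'+l)).

Ltac dall := repeat match goal with H : _ \/ _ |- _ => destruct H | H : _ /\ _ |- _ => destruct H end.

Lemma adj_T m n l (u v : 'I_m * 'I_n) : glob m n l -> htg_adj m n l u v ->
  TU n u.1 u.2 v.1 v.2 \/ TU n v.1 v.2 u.1 u.2 \/ TH m n l u.1 u.2 v.1 v.2.
Proof.
case: u => [[i hi] [j hj]]; case: v => [[i' hi'] [j' hj']]; rewrite /glob /htg_adj /TU /TH /= => G A.
case: G => G1 [G2 [G3 [G4 [G5 G6]]]]; clear G5.
have Hl : l < n by lia.
split_adj A; repeat match goal with H : context[_ %% n] |- _ => revert H end; elim_mod n.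
- move=> *; left; lia.
- move=> *; right; left; lia.
- move=> *; right; right; left; lia.
- move=> *; right; right; right; left; lia.
- move=> *; right; right; right; right; left; lia.
- move=> *; right; right; right; right; right; lia.
Qed.

Lemma adj_col m n l (u v : 'I_m * 'I_n) : glob m n l -> htg_adj m n l u v ->
  odd (v.1 + v.2) = ~~ odd (u.1 + u.2).
Proof.
move=> G /(@adj_T m n l u v G); case: u => [[i hi] [j hj]]; case: v => [[i' hi'] [j' hj']].
rewrite /glob /TU /TH /= in G *. case: G => G1 [G2 [G3 [G4 [G5 G6]]]]; clear G5.
have [k Hk] : exists k, n = k + k by exists n./2; lia.
clear G3 => A; dall; subst; lia.
Qed.

Definition G4 m n l := n = 4 \/ (m = 1 /\ l = 3) \/ (m = 1 /\ (l + l = n \/ l + l + 2 = n)) \/ (m = 2 /\ (l = 0 \/ l = 2)).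

Lemma fUf n i j a b c d : TU n i j a b -> TU n i j c d -> a = c /\ b = d.
Proof. rewrite /TU; lia. Qed.
Lemma fUb n i j a b c d : TU n a b i j -> TU n c d i j -> a = c /\ b = d.
Proof. rewrite /TU; lia. Qed.
Lemma sH m n l i j a b : TH m n l i j a b -> TH m n l a b i j.
Proof.
rewrite /TH => H; dall.
all: first [left; lia | right; left; lia | right; right; left; lia | right; right; right; lia].
Qed.

Lemma fH m n l i j a b c d : glob m n l -> i < m -> j < n -> a < m -> b < n -> c < m -> d < n ->
  TH m n l i j a b -> TH m n l i j c d -> a = c /\ b = d.
Proof.
rewrite /glob /TH => G; case: G => G1 [G2 [G3 [G4 [G5 G6]]]]; clear G5.
have [k Hk] : exists k, n = k + k by exists n./2; lia.
clear G3 => *; dall; subst; lia.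
Qed.

Lemma ord_pair_eq m n (x y : 'I_m * 'I_n) : (x.1 : nat) = y.1 -> (x.2 : nat) = y.2 -> x = y.
Proof.
case: x => [a b]; case: y => [c d] /= e1 e2.
by rewrite (val_inj e1) (val_inj e2).
Qed.

Lemma pUUUU m n l (a b c d : 'I_m * 'I_n) : glob m n l ->
  TU n a.1 a.2 b.1 b.2 -> TU n b.1 b.2 c.1 c.2 -> TU n c.1 c.2 d.1 d.2 -> TU n d.1 d.2 a.1 a.2 -> G4 m n l.
Proof.
case: a => [[ia ha] [ja ha']]; case: b => [[ib hb] [jb hb']]; case: c => [[ic hc] [jc hc']];
case: d => [[id hd] [jd hd']]; rewrite /glob /TU /G4 /= => G A B C D; left.
case: G => G1 [G2 [G3 [G4 [G5 G6]]]]; clear G5 G3 G4.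
dall; subst; lia.
Qed.

Lemma pHUUU m n l (a b c d : 'I_m * 'I_n) : glob m n l ->
  TH m n l a.1 a.2 b.1 b.2 -> TU n b.1 b.2 c.1 c.2 -> TU n c.1 c.2 d.1 d.2 -> TU n d.1 d.2 a.1 a.2 -> G4 m n l.
Proof.
case: a => [[ia ha] [ja ha']]; case: b => [[ib hb] [jb hb']]; case: c => [[ic hc] [jc hc']];
case: d => [[id hd] [jd hd']]; rewrite /glob /TU /TH /G4 /= => G A B C D; right; left.
case: G => G1 [G2 [G3 [G4 [G5 G6]]]].
have [k Hk] : exists k, n = k + k by exists n./2; lia.
clear G3.
have [m1|m2] : m = 1 \/ 2 <= m by lia.
- subst m; have [? ?] := G5 erefl; clear G5; dall; subst; lia.
- clear G5; exfalso; dall; subst; lia.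
Qed.

Lemma hvhv m n l k ia ja ib jb ic jc id jd :
  1 <= m -> 4 <= n -> n = k + k -> l %% 2 = m %% 2 -> (m = 1 -> l <> 1 /\ l + 1 <> n) -> l + l <= n ->
  ia < m -> ib < m -> ic < m -> id < m -> ja < n -> jb < n -> jc < n -> jd < n ->
  TH m n l ia ja ib jb -> (TU n ib jb ic jc \/ TU n ic jc ib jb) -> TH m n l ic jc id jd ->
  (TU n id jd ia ja \/ TU n ia ja id jd) ->
  n = 4 \/ (m = 1 /\ (l + l = n \/ l + l + 2 = n)) \/ (m = 2 /\ (l = 0 \/ l = 2)).
Proof.
rewrite /TU /TH => H1 H2 H3 H4 H5 H6 H7 H8 H9 H10 H11 H12 H13 H14 A B C D.
dall; subst; lia.
Qed.

Lemma pHVHV m n l (a b c d : 'I_m * 'I_n) : glob m n l ->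
  TH m n l a.1 a.2 b.1 b.2 -> (TU n b.1 b.2 c.1 c.2 \/ TU n c.1 c.2 b.1 b.2) -> TH m n l c.1 c.2 d.1 d.2 ->
  (TU n d.1 d.2 a.1 a.2 \/ TU n a.1 a.2 d.1 d.2) -> G4 m n l.
Proof.
case: a => [[ia ha] [ja ha']]; case: b => [[ib hb] [jb hb']]; case: c => [[ic hc] [jc hc']];
case: d => [[id hd] [jd hd']]; rewrite /glob /G4 /= => G A B C D.
case: G => G1 [G2 [G3 [G4 [G5 G6]]]].
have [k Hk] : exists k, n = k + k by exists n./2; lia.
have := @hvhv m n l k ia ja ib jb ic jc id jd G1 G2 Hk G4 G5 G6 ha hb hc hd ha' hb' hc' hd' A B C D.
tauto.
Qed.

Arguments adj_T {m n l u v}.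
Arguments adj_col {m n l u v}.
Arguments fUf {n i j a b c d}.
Arguments fUb {n i j a b c d}.
Arguments sH {m n l i j a b}.
Arguments fH {m n l i j a b c d}.
Arguments ord_pair_eq {m n x y}.
Arguments pUUUU {m n l a b c d}.
Arguments pHUUU {m n l a b c d}.
Arguments pHVHV {m n l a b c d}.

Ltac kill G Hac Hbd :=
  match goal with
  | X : TU _ ?i ?j ?a ?b, Y : TU _ ?i ?j ?c ?d |- _ =>
      let e1 := fresh in let e2 := fresh in let E := fresh in
      have [e1 e2] := fUf X Y; have E := ord_pair_eq e1 e2;
      first [by rewrite E eqxx in Hac | by rewrite E eqxx in Hbd]
  | X : TU _ ?a ?b ?i ?j, Y : TU _ ?c ?d ?i ?j |- _ =>
      let e1 := fresh in let e2 := fresh in let E := fresh in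
      have [e1 e2] := fUb X Y; have E := ord_pair_eq e1 e2;
      first [by rewrite E eqxx in Hac | by rewrite E eqxx in Hbd]
  | X : TH _ _ _ ?i ?j ?a ?b, Y : TH _ _ _ ?i ?j ?c ?d |- _ =>
      let e1 := fresh in let e2 := fresh in let E := fresh in
      have [e1 e2] := fH G (ltn_ord _) (ltn_ord _) (ltn_ord _) (ltn_ord _) (ltn_ord _) (ltn_ord _) X Y;
      have E := ord_pair_eq e1 e2;
      first [by rewrite E eqxx in Hac | by rewrite E eqxx in Hbd]
  end.

Ltac pat G :=
  match goal with
  | X : TU _ ?p1 ?p2 ?q1 ?q2, Y : TU _ ?q1 ?q2 ?r1 ?r2, Z : TU _ ?r1 ?r2 ?s1 ?s2, W : TU _ ?s1 ?s2 ?p1 ?p2 |- _ =>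
      exact: (pUUUU G X Y Z W)
  | X : TH _ _ _ ?p1 ?p2 ?q1 ?q2, Y : TU _ ?q1 ?q2 ?r1 ?r2, Z : TU _ ?r1 ?r2 ?s1 ?s2, W : TU _ ?s1 ?s2 ?p1 ?p2 |- _ =>
      exact: (pHUUU G X Y Z W)
  | X : TH _ _ _ ?p1 ?p2 ?q1 ?q2, Y : TU _ ?q1 ?q2 ?r1 ?r2, Z : TH _ _ _ ?r1 ?r2 ?s1 ?s2, W : TU _ ?s1 ?s2 ?p1 ?p2 |- _ =>
      exact: (pHVHV G X (or_introl Y) Z (or_introl W))
  | X : TH _ _ _ ?p1 ?p2 ?q1 ?q2, Y : TU _ ?r1 ?r2 ?q1 ?q2, Z : TH _ _ _ ?r1 ?r2 ?s1 ?s2, W : TU _ ?s1 ?s2 ?p1 ?p2 |- _ =>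
      exact: (pHVHV G X (or_intror Y) Z (or_introl W))
  | X : TH _ _ _ ?p1 ?p2 ?q1 ?q2, Y : TU _ ?q1 ?q2 ?r1 ?r2, Z : TH _ _ _ ?r1 ?r2 ?s1 ?s2, W : TU _ ?p1 ?p2 ?s1 ?s2 |- _ =>
      exact: (pHVHV G X (or_introl Y) Z (or_intror W))
  | X : TH _ _ _ ?p1 ?p2 ?q1 ?q2, Y : TU _ ?r1 ?r2 ?q1 ?q2, Z : TH _ _ _ ?r1 ?r2 ?s1 ?s2, W : TU _ ?p1 ?p2 ?s1 ?s2 |- _ =>
      exact: (pHVHV G X (or_intror Y) Z (or_intror W))
  end.

Lemma four_ord m n l (a b c d : 'I_m * 'I_n) : glob m n l ->
  htg_adj m n l a b -> htg_adj m n l b c -> htg_adj m n l c d -> htg_adj m n l d a ->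
  a != c -> b != d -> G4 m n l.
Proof.
move=> G Hab Hbc Hcd Hda Hac Hbd.
case: (adj_T G Hab) => [A|[A|A]]; case: (adj_T G Hbc) => [B|[B|B]];
case: (adj_T G Hcd) => [C|[C|C]]; case: (adj_T G Hda) => [D|[D|D]].
all: try (have A' := sH A); try (have B' := sH B); try (have C' := sH C); try (have D' := sH D).
all: first [kill G Hac Hbd | pat G].
Qed.

Arguments four_ord {m n l a b c d}.

Lemma path_col m n l (x : 'I_m * 'I_n) p : glob m n l -> path (htg_adj m n l) x p ->
  odd ((last x p).1 + (last x p).2) = odd (x.1 + x.2) (+) odd (size p).
Proof.
move=> G; elim: p x => [|y p IH] x /=; first by rewrite addbF.
move/andP=> [hxy hp]; rewrite IH // (adj_col G hxy) /=.
by rewrite addNb addbN.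
Qed.

Arguments path_col {m n l x p}.

Lemma cycle_even m n l (c : seq ('I_m * 'I_n)) : glob m n l -> cycle (htg_adj m n l) c -> ~~ odd (size c).
Proof.
move=> G; case: c => [//|x p] /= hc.
have := path_col G hc; rewrite last_rcons size_rcons /=.
by case: (odd (x.1 + x.2)); case: (odd (size p)).
Qed.

Arguments cycle_even {m n l c}.

Definition vx m n i j (hi : i < m) (hj : j < n) : 'I_m * 'I_n := (Ordinal hi, Ordinal hj).

Lemma uniq_emb m n (c : seq ('I_m * 'I_n)) :
  uniq (map (fun u : 'I_m * 'I_n => (nat_of_ord u.1, nat_of_ord u.2)) c) -> uniq c.
Proof. exact: map_uniq. Qed.

Arguments vx {m n i j}.
Arguments uniq_emb {m n c}.

Ltac junk := repeat match goal with
  | H : glob _ _ _ |- _ => clear H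
  | H : G4 _ _ _ -> _ |- _ => clear H
  | H : _ = 1 -> _ |- _ => clear H
  | H : odd _ = odd _ |- _ => clear H
  | H : is_true (~~ odd _) |- _ => clear H
  | H : context [ _./2 ] |- _ => clear H
  | H : context [ _ %% 4 ] |- _ => clear H
  end.

Lemma modn_big x n : n <= x -> x < 2 * n -> x %% n = x - n.
Proof. move=> h1 h2; rewrite -{1}(subnK h1) modnDr modn_small //; lia. Qed.

Ltac fix_mod n := repeat match goal with |- context[?x %% n] =>
  first [ rewrite (@modn_small x n); last by lia | rewrite (@modn_big x n); [|lia|lia] ] end.

Ltac sconj := repeat (apply/andP; split); lia.
Ltac sor := first [ apply/orP; first [ left; sor | right; sor ] | sconj ].

Ltac wit n :=
  junk;
  rewrite /is_graph_cycle /ucycleb; apply/andP; split; [apply/andP; split|done];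
  [ rewrite /= /htg_adj /=; fix_mod n; repeat (apply/andP; split); sor
  | apply: uniq_emb; rewrite /= ?inE ?xpair_eqE /= ?negb_or; repeat (apply/andP; split); lia ].

Definition condb (m n l : nat) : bool :=
  [|| n == 4,
      [&& m == 1, 4 < n & l == 3],
      [&& m == 1, 4 < n, n %% 4 == 2 & l == n./2],
      [&& m == 1, 4 < n, n %% 4 == 0 & l == (n - 2)./2]
    | [&& m == 2, 4 < n & ((l == 0) || (l == 2))]].


Ltac unglob G := case: (G) => Hm [Hn [Hodd [Hlm2 [Hs' Hll]]]]; have Hln : l < n by lia.

Lemma G4c_lem m n l : glob m n l -> G4 m n l -> condb m n l.
Proof.
move=> G; unglob G.
have [k Hk] : exists k, n = k + k by exists n./2; lia.
rewrite /G4 /condb => H; have [->|n5] : n = 4 \/ 4 < n by lia.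
  by rewrite eqxx.
clear -H Hm n5 Hk Hlm2 Hll; dall; subst; sor.
Qed.

Lemma ex4a m l : 0 < m -> exists c, is_graph_cycle (htg_adj m 4 l) c /\ size c = 4.
Proof.
move=> h0.
exists [:: vx h0 (isT : 0 < 4); vx h0 (isT : 1 < 4); vx h0 (isT : 2 < 4); vx h0 (isT : 3 < 4)]; split; [wit 4|done].
Qed.

Lemma ex4b n : 4 < n -> exists c, is_graph_cycle (htg_adj 1 n 3) c /\ size c = 4.
Proof.
move=> h4.
have h0 : 0 < 1 by []. have h1 : 1 < n by lia. have h2 : 2 < n by lia.
have h3 : 3 < n by lia.
exists [:: vx h0 h1; vx h0 h2; vx h0 h3; vx h0 h4]; split; [wit n|done].
Qed.

Lemma ex4c n l : 4 < n -> l + l = n -> l %% 2 = 1 -> exists c, is_graph_cycle (htg_adj 1 n l) c /\ size c = 4.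
Proof.
move=> n4 e Hlm2.
have h0 : 0 < 1 by []. have h1 : 1 < n by lia. have h2 : 2 < n by lia.
have h3 : 1 + l < n by lia. have h4 : 2 + l < n by lia. have Hln : l < n by lia.
exists [:: vx h0 h1; vx h0 h3; vx h0 h4; vx h0 h2]; split; [wit n|done].
Qed.

Lemma ex4d n l : 4 < n -> l + l + 2 = n -> l %% 2 = 1 -> exists c, is_graph_cycle (htg_adj 1 n l) c /\ size c = 4.
Proof.
move=> n4 e Hlm2.
have h0 : 0 < 1 by []. have h1 : 1 < n by lia. have h2 : 0 < n by lia.
have h3 : 1 + l < n by lia. have h4 : 2 + l < n by lia. have Hln : l < n by lia.
exists [:: vx h0 h1; vx h0 h3; vx h0 h4; vx h0 h2]; split; [wit n|done].
Qed.

Lemma ex4e n l : 4 < n -> (l = 0 \/ l = 2) -> exists c, is_graph_cycle (htg_adj 2 n l) c /\ size c = 4.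
Proof.
move=> n4 hl.
have h0 : 0 < 2 by []. have h1 : 1 < 2 by []. have j0 : 0 < n by lia.
have j1 : 1 < n by lia. have j2 : 2 < n by lia.
case: hl => hl; subst l.
- exists [:: vx h0 j0; vx h1 j0; vx h1 j1; vx h0 j1]; split; [wit n|done].
- exists [:: vx h1 j0; vx h0 j2; vx h0 j1; vx h1 j1]; split; [wit n|done].
Qed.

Lemma ex6a n l : 3 + l < n -> 3 <= l -> l %% 2 = 1 -> exists c, is_graph_cycle (htg_adj 1 n l) c /\ size c = 6.
Proof.
move=> hl3 l3 Hlm2.
have h0 : 0 < 1 by [].
have h1 : 1 < n by lia. have h2 : 2 < n by lia. have h3 : 3 < n by lia.
have h4 : 1 + l < n by lia. have h5 : 2 + l < n by lia. have Hln : l < n by lia.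
exists [:: vx h0 h1; vx h0 h2; vx h0 h3; vx h0 hl3; vx h0 h5; vx h0 h4]; split; [wit n|done].
Qed.

Lemma ex6b m n l : 1 < m -> 3 < n -> l < n -> exists c, is_graph_cycle (htg_adj m n l) c /\ size c = 6.
Proof.
move=> h1 j3 Hln.
have h0 : 0 < m by lia.
have j1 : 1 < n by lia. have j2 : 2 < n by lia.
exists [:: vx h0 j1; vx h1 j1; vx h1 j2; vx h1 j3; vx h0 j3; vx h0 j2]; split; [wit n|done].
Qed.

Lemma exist_cyc m n l : glob m n l ->
  exists c, is_graph_cycle (htg_adj m n l) c /\ size c = (if condb m n l then 4 else 6).
Proof.
move=> G; unglob G.
case: ifP => hc.
- move: hc; rewrite /condb => hc.
  case/orP: hc => [/eqP n4|/orP[/and3P[/eqP m1 n4 /eqP l3]|/orP[/and4P[/eqP m1 n4 /eqP n42 /eqP ln]|/orP[/and4P[/eqP m1 n4 /eqP n40 /eqP ln]|/and3P[/eqP m2 n4 hl]]]]].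
  + subst n; exact: ex4a.
  + subst m l; exact: ex4b.
  + subst m; apply: ex4c => //; lia.
  + subst m; apply: ex4d => //; lia.
  + subst m; apply: ex4e => //; case/orP: hl => /eqP; tauto.
- have [m1|m2] : m = 1 \/ 2 <= m by lia.
  + subst m.
    have n4 : n <> 4 by move=> E; move: hc; rewrite /condb E eqxx.
    have n5 : 4 < n by lia.
    have nl3 : l <> 3 by move=> E; move: hc; rewrite /condb E n5 !eqxx /= orbT.
    have [l1 _] := Hs' erefl.
    have hl3 : 3 + l < n by clear -n4 n5 nl3 l1 Hlm2 Hll; lia.
    apply: ex6a => //; lia.
  + exact: ex6b.
Qed.

Lemma lower_cyc m n l : glob m n l -> forall c, is_graph_cycle (htg_adj m n l) c ->
  (if condb m n l then 4 else 6) <= size c.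
Proof.
move=> G c /andP[/andP[Hcy Hu] Hsz].
have Hev := cycle_even G Hcy.
have h4 : size c = 4 -> condb m n l.
  case: c Hcy Hu {Hsz Hev} => [|a [|b [|c' [|d [|e s]]]]] //= Hcy Hu _.
  move: Hcy; rewrite andbT => /and4P[Hab Hbc Hcd Hda].
  apply: (@G4c_lem m n l G); apply: (four_ord G Hab Hbc Hcd Hda).
  + apply/negP => /eqP E; subst c'; move: Hu; by rewrite /= !inE eqxx !orbT ?andbF.
  + apply/negP => /eqP E; subst d; move: Hu; by rewrite /= !inE eqxx !orbT ?andbF.
case: ifP => hc.
- move: Hsz Hev; move: (size c) => s; clear; lia.
- have : size c <> 4 by move=> /h4; rewrite hc.
  move: Hsz Hev; move: (size c) => s; clear; lia.
Qed.

Theorem theorem5p1 (m n l : nat) :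
  1 <= m -> 4 <= n -> ~~ odd n ->
  odd l = odd m ->
  (* simple 3-regular: for m = 1, l is not congruent to +-1 mod n *)
  (m = 1 -> l %% n != 1 /\ l %% n != n - 1) ->
  (* normal form *)
  l <= n./2 ->
  girth_is (htg_adj m n l)
    (if [|| n == 4,
            [&& m == 1, 4 < n & l == 3],
            [&& m == 1, 4 < n, n %% 4 == 2 & l == n./2],
            [&& m == 1, 4 < n, n %% 4 == 0 & l == (n - 2)./2]
          | [&& m == 2, 4 < n & ((l == 0) || (l == 2))]]
     then 4 else 6).
Proof.
move=> Hm Hn Hodd Hlm Hs Hl.
have Hlm2 : l %% 2 = m %% 2 by rewrite !modn2 Hlm.
have Hs' : m = 1 -> l <> 1 /\ l + 1 <> n.
  move=> /Hs; rewrite modn_small; last by lia.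
  move=> -[/eqP ? /eqP ?]; lia.
have Hll : l + l <= n by lia.
have G : glob m n l by split; [done|split; [done|split; [done|split; [done|split; [done|done]]]]].
change (girth_is (htg_adj m n l) (if condb m n l then 4 else 6)).
split; [exact: exist_cyc | exact: lower_cyc].
Qed.
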